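(* Let $q$ be a prime power, let $m, c, h, M$ be positive integers and $\gamma \geq 0$ a real number with $c < \frac{(m-1) - m\gamma}{m} M$. Let $r_1, \ldots, r_m : \mathbb{F}_q \to \mathbb{F}_q$ be functions with $$\left|\{\alpha \in \mathbb{F}_q : r_i(\alpha) \neq r_j(\alpha) \text{ for some } i, j\}\right| \leq \gamma q.$$ Suppose $F_1(X), \ldots, F_m(X) \in \mathbb{F}_q[X]$ satisfy $\deg(F_i) < cq$ and each $F_i$ is an $r_i$-twisted $(h,M)$-pseudopolynomial. Let $k$ be an integer with $$k > \frac{M}{(m - 1 - m\gamma)M - mc}\cdot (h+1).$$ Then there exist $k$-pseudopolynomials $A_1(X), \ldots, A_m(X) \in \mathbb{F}_q[X]$ with $\deg(A_i) < Mq$, not all zero, such that $$\sum_{i=1}^m A_i(X) F_i(X) = 0.$$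
   Context: For $A(X) \in \mathbb{F}_q[X]$, $A^{[\ell]}(X)$ is the $\ell$-th Hasse derivative (the coefficient of $Z^\ell$ in $A(X+Z)$ expanded in powers of $Z$). With $\Lambda(X) = X^q - X$, the $\ell$-th pseudoderivative is $A_{\langle \ell \rangle}(X) = A^{[\ell]}(X) \bmod \Lambda(X)$. The pseudodegree is $\mathsf{pdeg}(A) = \max_{\ell \geq 0}\deg(A_{\langle\ell\rangle})$, and $A$ is a $k$-pseudopolynomial if $\mathsf{pdeg}(A) \leq k$. Given $r : \mathbb{F}_q \to \mathbb{F}_q$, a polynomial $F(X)$ is an $r$-twisted $(h,M)$-pseudopolynomial if for every $\ell$ with $0 \leq \ell < M$ there is $U_\ell(X) \in \mathbb{F}_q[X]$ of degree at most $h$ with $F^{[\ell]}(\alpha) = r(\alpha)\cdot U_\ell(\alpha)$ for all $\alpha \in \mathbb{F}_q$. *)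

(* Defs.v *)
From HB Require Import structures.
From mathcomp Require Import all_boot all_order all_algebra all_field.
From mathcomp Require Import reals.
Set Implicit Arguments. Unset Strict Implicit. Unset Printing Implicit Defensive.
Import Order.TTheory GRing.Theory Num.Theory.
Local Open Scope ring_scope.

Section PseudoPoly.
Variable F : finFieldType.

(* The l-th Hasse derivative: coefficient of Z^l in A(X+Z).  MathComp's
   nderivn n p = \poly_(i) (p`_(n+i) *+ 'C(n+i, n)) is exactly this. *)
Definition hasse (l : nat) (A : {poly F}) : {poly F} := nderivn l A.

Definition Lam : {poly F} := 'X^#|F| - 'X.

Definition pseudoderiv (l : nat) (A : {poly F}) : {poly F} := hasse l A %% Lam.

(* A is a k-pseudopolynomial: pdeg A = max_l deg(A_<l>) <= k, with deg 0 = -oo,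
   i.e. every pseudoderivative has degree <= k (size <= k+1). *)
Definition is_pseudopoly (k : int) (A : {poly F}) : Prop :=
  forall l : nat, ((size (pseudoderiv l A))%:Z <= k + 1)%R.

Definition is_twisted_pseudopoly (r : F -> F) (h M : nat) (P : {poly F}) : Prop :=
  forall l : nat, (l < M)%N ->
    exists U : {poly F}, (size U <= h.+1)%N /\
      forall a : F, (hasse l P).[a] = r a * U.[a].
End PseudoPoly.

(* Main.v *)
Require Import Defs.
From HB Require Import structures.
From mathcomp Require Import all_boot all_order all_algebra all_field.
From mathcomp Require Import reals.

Import Order.TTheory GRing.Theory Num.Theory.
From mathcomp Require Import zify ring lra.
Local Open Scope ring_scope.

Lemma hasse_eval (F : finFieldType) (p : {poly F}) l (a : F) :
  (hasse l p).[a] = (p \Po ('X + a%:P))`_l.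
Proof.
rewrite /comp_poly addrC.
rewrite (@nderiv_taylor_wide _ (maxn (size p) l.+1) (p ^:P) a%:P 'X); last first.
- by rewrite size_map_polyC leq_maxl.
- exact: commr_polyX.
rewrite coef_sum (bigD1 (Ordinal (leq_maxr (size p) l.+1))) //= big1.
  by rewrite addr0 nderivn_map horner_map /= coefCM coefXn eqxx mulr1.
move=> i /eqP ne; rewrite nderivn_map horner_map /= coefCM coefXn.
case: eqP => [e|]; last by rewrite mulr0.
by exfalso; apply: ne; apply: val_inj => /=; apply/eqP; rewrite -e.
Qed.

Lemma Lam_prod (F : finFieldType) : Lam F = \prod_(x : F) ('X - x%:P).
Proof. by rewrite /Lam finField_genPoly. Qed.

Lemma Lam_comp (F : finFieldType) (a : F) : Lam F \Po ('X + a%:P) = Lam F.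
Proof.
rewrite Lam_prod.
have h1 : (1 : {poly F}) \Po ('X + a%:P) = 1 by rewrite -polyC1 comp_polyC.
rewrite (big_morph (fun p => p \Po ('X + a%:P)) (fun p q => comp_polyM p q _) h1).
rewrite (reindex_inj (addrI a)) /=; apply: eq_bigr => x _.
rewrite comp_polyB comp_polyX comp_polyC polyCD opprD addrA; congr (_ - _); by rewrite addrK.
Qed.

Lemma Lam_root (F : finFieldType) (a : F) : (Lam F).[a] = 0.
Proof.
rewrite /Lam hornerD hornerN hornerXn hornerX.
by rewrite expf_card subrr.
Qed.

Lemma size_Lam (F : finFieldType) : size (Lam F) = #|F|.+1.
Proof. by rewrite Lam_prod -big_enum /= size_prod_XsubC -cardE. Qed.

Lemma Lam_monic (F : finFieldType) : Lam F \is monic.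
Proof. by rewrite Lam_prod monic_prod_XsubC. Qed.

Lemma Lam_neq0 (F : finFieldType) : Lam F != 0.
Proof. by rewrite -size_poly_eq0 size_Lam. Qed.

Lemma pseudoderiv_eval (F : finFieldType) l (p : {poly F}) (a : F) :
  (pseudoderiv l p).[a] = (hasse l p).[a].
Proof.
rewrite /pseudoderiv [in RHS](divp_eq (hasse l p) (Lam F)).
by rewrite hornerD hornerM Lam_root mulr0 add0r.
Qed.

Lemma pseudoderiv_eq (F : finFieldType) l (p Q : {poly F}) :
  (size Q <= #|F|)%N -> (forall a, (hasse l p).[a] = Q.[a]) ->
  pseudoderiv l p = Q.
Proof.
move=> sQ hQ.
have hdiv : Lam F %| hasse l p - Q.
  rewrite Lam_prod -big_enum /=.
  apply: uniq_roots_dvdp; last by rewrite uniq_rootsE enum_uniq.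
  by apply/allP => x _; rewrite /root !hornerE hQ subrr.
rewrite /pseudoderiv -[hasse l p](subrK Q) modpD.
move/modp_eq0P: hdiv => ->; rewrite add0r modp_small // size_Lam ltnS //.
Qed.

Lemma size_sum_le (F : fieldType) (I : Type) (r : seq I) (P : pred I) (f : I -> {poly F}) n :
  (forall i, P i -> (size (f i) <= n)%N) -> (size (\sum_(i <- r | P i) f i)%R <= n)%N.
Proof.
move=> H; elim/big_rec: _ => [|i x Pi Hx]; first by rewrite size_poly0.
by rewrite (leq_trans (size_add _ _)) // geq_max H.
Qed.

Lemma comp_exp (F : fieldType) (p q : {poly F}) n : (p ^+ n) \Po q = (p \Po q) ^+ n.
Proof.
elim: n => [|n IH]; first by rewrite !expr0 -polyC1 comp_polyC.
by rewrite !exprS comp_polyM IH.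
Qed.

Lemma size_hasse (F : finFieldType) s (B : {poly F}) : (size (hasse s B) <= size B)%N.
Proof. by rewrite /hasse /nderivn (leq_trans (size_poly _ _)) // leq_subr. Qed.

Lemma hasse_BLam_eval (F : finFieldType) (B : {poly F}) j l (x : F) :
  (hasse l (B * Lam F ^+ j)).[x] =
  \sum_(s < l.+1) (hasse s B).[x] * (Lam F ^+ j)`_(l - s).
Proof.
rewrite hasse_eval comp_polyM comp_exp Lam_comp coefM.
by apply: eq_bigr => s _; rewrite hasse_eval.
Qed.

Lemma pseudoderiv_BLam (F : finFieldType) (B : {poly F}) j l :
  (size B <= #|F|)%N -> (size (pseudoderiv l (B * Lam F ^+ j)) <= size B)%N.
Proof.
move=> sB.
set Q := \sum_(s < l.+1) hasse s B * ((Lam F ^+ j)`_(l - s))%:P.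
have sQ : (size Q <= size B)%N.
  apply: size_sum_le => s _.
  by rewrite (leq_trans (size_mul_leq _ _)) // size_polyC; case: eqP => _;
     rewrite ?addn0 ?addn1 /= ?(leq_trans (leq_pred _)) ?size_hasse.
rewrite (@pseudoderiv_eq _ _ _ Q) //; first exact: leq_trans sQ sB.
move=> a; rewrite hasse_BLam_eval /Q horner_sum; apply: eq_bigr => s _.
by rewrite hornerM hornerC.
Qed.

Lemma Lam_adic_inj (F : finFieldType) n (B : nat -> {poly F}) :
  (forall j, size (B j) <= #|F|)%N -> \sum_(j < n) B j * Lam F ^+ j = 0 ->
  forall j, (j < n)%N -> B j = 0.
Proof.
elim: n B => [|n IH] B sB H j; first by [].
rewrite big_ord_recl expr0 mulr1 in H.
have eR : \sum_(i < n) B (bump 0 i) * Lam F ^+ (bump 0 i) =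
          (\sum_(i < n) B i.+1 * Lam F ^+ i) * Lam F.
  by rewrite mulr_suml; apply: eq_bigr => i _; rewrite -mulrA -exprSr.
rewrite eR in H.
set R := \sum_(i < n) B i.+1 * Lam F ^+ i in H eR.
have R0 : R = 0.
  apply/eqP; apply/negPn/negP => nzR.
  have : size (R * Lam F) = size (B 0%N).
    have -> : R * Lam F = - B 0%N by apply/eqP; rewrite -addr_eq0 addrC H.
    by rewrite size_opp.
  rewrite size_mul // ?Lam_neq0 // size_Lam addnS /= => e.
  have := sB 0%N; rewrite -e.
  have : size R != 0%N by rewrite size_poly_eq0.
  by case: (size R) => [|k] //= _; rewrite addSn ltnNge leq_addl.
rewrite R0 mul0r addr0 in H.
case: j => [|j] //= ltjn.
exact: (IH (fun i => B i.+1)).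
Qed.

Lemma mult_dvd (F : fieldType) M (G : {poly F}) (x : F) :
  (forall t, (t < M)%N -> (G \Po ('X + x%:P))`_t = 0) -> ('X - x%:P) ^+ M %| G.
Proof.
move=> H.
set P := G \Po ('X + x%:P).
have tk : take_poly M P = 0.
  by apply/polyP => i; rewrite coef_take_poly coef0; case: ifP => // /H.
have eP : P = drop_poly M P * 'X^M by rewrite -{1}(poly_take_drop M P) tk add0r.
have -> : G = P \Po ('X - x%:P) by rewrite comp_polyXaddC_K.
rewrite eP comp_polyM comp_exp comp_polyX.
exact: dvdp_mull.
Qed.

Lemma mult_prod_dvd (F : fieldType) M (G : {poly F}) (s : seq F) :
  uniq s -> (forall x, x \in s -> ('X - x%:P) ^+ M %| G) ->
  \prod_(x <- s) ('X - x%:P) ^+ M %| G.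
Proof.
elim: s => [|x s IH] /=; first by rewrite big_nil dvd1p.
move=> /andP[xs us] H.
rewrite big_cons Gauss_dvdp; first by rewrite H ?mem_head // IH // => y ys; rewrite H // inE ys orbT.
apply: coprimep_expl; rewrite coprimep_sym coprimep_XsubC /root horner_prod.
rewrite prodf_seq_neq0; apply/allP => y ys /=.
rewrite horner_exp hornerXsubC expf_neq0 // subr_eq0.
by apply/eqP => exy; move: xs; rewrite exy ys.
Qed.

Lemma size_prod_exp (F : fieldType) M (s : seq F) :
  size (\prod_(x <- s) ('X - x%:P) ^+ M) = (M * size s).+1.
Proof.
elim: s => [|x s IH]; first by rewrite big_nil size_poly1 muln0.
rewrite big_cons /= size_Mmonic.
- rewrite size_exp_XsubC IH mulnS; lia.
- by rewrite expf_neq0 // -size_poly_eq0 size_XsubC.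
- by apply: monic_prod => y _; apply: monic_exp; apply: monicXsubC.
Qed.

Lemma mult_zero (F : fieldType) M (s : seq F) (G : {poly F}) :
  uniq s -> (forall x, x \in s -> forall t, (t < M)%N -> (G \Po ('X + x%:P))`_t = 0) ->
  (size G <= M * size s)%N -> G = 0.
Proof.
move=> us H sG; apply/eqP; apply/negPn/negP => nzG.
have := dvdp_leq nzG (mult_prod_dvd _ _ _ _ us (fun x xs => mult_dvd _ _ _ _ (H x xs))).
by rewrite size_prod_exp ltnNge sG.
Qed.
Local Open Scope nat_scope.
Lemma sum_lt_min (K n L : nat) : \sum_(a < K) ((n + a < L)%N : nat) = minn K (L - n).
Proof.
elim: K => [|K IH]; first by rewrite big_ord0 min0n.
rewrite big_ord_recr /= IH; case: ltnP => h; lia.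
Qed.

Lemma sum_min_q (M q L : nat) : \sum_(j < M) minn q (L - j * q) = minn (M * q) L.
Proof.
elim: M => [|M IH]; first by rewrite big_ord0 mul0n min0n.
rewrite big_ord_recr /= IH mulSn; lia.
Qed.

Lemma count_valid (M K q L : nat) : (K <= q)%N ->
  (K * minn (M * q) L <= #|[set y : 'I_M * 'I_K | y.1 * q + y.2 < L]| * q)%N.
Proof.
move=> Kq.
have -> : #|[set y : 'I_M * 'I_K | y.1 * q + y.2 < L]| =
          \sum_(j < M) \sum_(a < K) ((j * q + a < L)%N : nat).
  rewrite -sum1_card big_mkcond /= pair_big /=; apply: eq_bigr => j _.
  by rewrite inE; case: (_ < L)%N.
rewrite -sum_min_q big_distrr big_distrl /=; apply: leq_sum => j _.
rewrite sum_lt_min.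
have : (K * q <= q * K)%N by rewrite mulnC.
case: (leqP (L - j * q) K) => h1; case: (leqP (L - j * q) q) => h2; nia.
Qed.
Lemma card_valid m M K q L : #|[pred x : 'I_m * ('I_M * 'I_K) | (x.2.1 * q + x.2.2 < L)%N]| = (m * #|[set y : 'I_M * 'I_K | (y.1 * q + y.2 < L)%N]|)%N.
Proof.
rewrite -[in RHS](card_ord m) -cardsT -cardsX.
apply: eq_card => x.
by rewrite !inE.
Qed.

Local Open Scope ring_scope.
Lemma real_ineq (R : realFieldType) (m c h M gamma k q g : R) :
  0 < m -> 0 < M -> 0 <= gamma -> 0 < q -> 0 <= k -> 0 <= h ->
  c * m < (m - 1 - m * gamma) * M ->
  M * (h + 1) < k * ((m - 1 - m * gamma) * M - m * c) ->
  q - gamma * q <= g ->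
  c * q < M * g /\ q * M * (k + 1 + h) < m * (k + 1) * (M * g - c * q).
Proof.
move=> m0 M0 g0 q0 k0 h0 H1 H2 H3.
set E := M - gamma * M - c.
have hE : M < m * E by rewrite /E; lra.
have hD : (m - 1 - m * gamma) * M - m * c = m * E - M by rewrite /E; ring.
have f1 : q * E <= M * g - c * q.
  have : 0 <= M * (g - (q - gamma * q)) by rewrite mulr_ge0 ?subr_ge0 // ltW.
  rewrite /E; lra.
have f2 : M * (k + 1 + h) < m * (k + 1) * E.
  rewrite hD in H2; lra.
have Ep : 0 < E.
  have : 0 < m * E by lra.
  by rewrite pmulr_rgt0.
split.
  have : 0 < q * E by rewrite mulr_gt0.
  lra.
have f3 : q * (M * (k + 1 + h)) < q * (m * (k + 1) * E) by rewrite ltr_pM2l.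
have f4 : m * (k + 1) * (q * E) <= m * (k + 1) * (M * g - c * q).
  by rewrite ler_pM2l // mulr_gt0 //; lra.
lra.
Qed.

Lemma pseudoderiv_sum (F : finFieldType) l I (r : seq I) (P : pred I) (f : I -> {poly F}) :
  pseudoderiv l (\sum_(i <- r | P i) f i) = \sum_(i <- r | P i) pseudoderiv l (f i).
Proof.
rewrite /pseudoderiv /hasse linear_sum.
by rewrite (big_morph (fun p => p %% Lam F) (modpD _) (mod0p _)).
Qed.

Lemma pseudoderivB (F : finFieldType) l (p p' : {poly F}) :
  pseudoderiv l (p - p') = pseudoderiv l p - pseudoderiv l p'.
Proof. by rewrite /pseudoderiv /hasse nderivnB modpD modpN. Qed.

Lemma pseudo_of_nat (F : finFieldType) kn (A : {poly F}) :
  (forall l, size (pseudoderiv l A) <= kn.+1)%N -> is_pseudopoly (Posz kn) A.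
Proof. by move=> H l; rewrite -[1]/(Posz 1) -PoszD lez_nat addn1; exact: H. Qed.

Theorem lemma5p8 (F : finFieldType) (R : realType) (m c h M : nat) (gamma : R)
  (k : int) (r : 'I_m -> F -> F) (Fs : 'I_m -> {poly F}) :
  (0 < m)%N -> (0 < c)%N -> (0 < h)%N -> (0 < M)%N -> 0 <= gamma ->
  c%:R < ((m%:R - 1) - m%:R * gamma) / m%:R * M%:R ->
  (#|[set a : F | [exists i, exists j, r i a != r j a]]|%:R <= gamma * #|F|%:R) ->
  (forall i, (size (Fs i) <= c * #|F|)%N) ->
  (forall i, is_twisted_pseudopoly (r i) h M (Fs i)) ->
  M%:R / (((m%:R - 1) - m%:R * gamma) * M%:R - m%:R * c%:R) * (h%:R + 1) < (k%:~R : R) ->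
  exists A : 'I_m -> {poly F},
    (forall i, is_pseudopoly k (A i) /\ (size (A i) <= M * #|F|)%N) /\
    (exists i, A i != 0) /\
    \sum_(i < m) A i * Fs i = 0.
Proof.
move=> m0 c0 h0 M0 g0 hc hbad hFs htw hk.
set q := #|F|.
have q0 : (0 < q)%N by apply/card_gt0P; exists 0.
have mR : (0 : R) < m%:R by rewrite ltr0n.
have MR : (0 : R) < M%:R by rewrite ltr0n.
have hc' : c%:R * m%:R < ((m%:R - 1) - m%:R * gamma) * M%:R :> R.
  by rewrite -ltr_pdivlMr // mulrAC.
have DR : (0 : R) < ((m%:R - 1) - m%:R * gamma) * M%:R - m%:R * c%:R by lra.
have hk' : M%:R * (h%:R + 1) < k%:~R * (((m%:R - 1) - m%:R * gamma) * M%:R - m%:R * c%:R) :> R.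
  by rewrite -ltr_pdivrMr // mulrAC.
have kpos : (0 < k)%R.
  rewrite -(ltr0z R); apply: lt_trans hk; rewrite mulr_gt0 ?divr_gt0 //.
  by rewrite ltr_pwDr // ler0n.
case: k kpos hk hk' => [kn|kn] // _ hk hk'.
have m1 : (1 < m)%N.
  rewrite ltnNge; apply/negP => hm1.
  have em : m = 1%N by clear -m0 hm1; lia.
  move: hc'; rewrite em mulr1 => hc'.
  have : (0 : R) < c%:R by rewrite ltr0n.
  have : 0 <= gamma * M%:R by rewrite mulr_ge0 // ler0n.
  lra.
have cM : (c <= M)%N.
  rewrite -(ler_nat R); have : 0 <= m%:R * gamma * M%:R :> R by rewrite !mulr_ge0 // ler0n.
  nra.
pose i0 : 'I_m := Ordinal m0.
pose i1 : 'I_m := Ordinal m1.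
have i01 : i1 != i0 by [].
case: (leqP q kn) => hqk.
  have allpp : forall p : {poly F}, is_pseudopoly (Posz kn) p.
    move=> p; apply: pseudo_of_nat => l.
    have := ltn_modp (hasse l p) (Lam F); rewrite Lam_neq0 size_Lam => /= H.
    by rewrite /pseudoderiv (leq_trans _ (leq_trans hqk (leqnSn _))) // -ltnS.
  have sF : forall i, (size (Fs i) <= M * q)%N.
    by move=> i; rewrite (leq_trans (hFs i)) // leq_mul2r cM orbT.
  have [F1|F1] := eqVneq (Fs i1) 0.
    exists (fun i => if i == i1 then 1 else 0); split; [|split].
    - move=> i; split => //; case: (i == i1); rewrite ?size_poly0 ?size_poly1 //.
      by rewrite muln_gt0 M0.
    - by exists i1; rewrite eqxx oner_neq0.
    - rewrite (bigD1 i1) //= F1 mulr0 add0r big1 // => i /negbTE ->.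
      by rewrite mul0r.
  exists (fun i => if i == i0 then Fs i1 else if i == i1 then - Fs i0 else 0).
  split; [|split].
  - move=> i; split => //; case: (i == i0); first exact: sF.
    by case: (i == i1); rewrite ?size_opp ?size_poly0.
  - by exists i0; rewrite eqxx.
  - rewrite (bigD1 i0) //= (bigD1 i1) //= big1.
      by rewrite addr0 mulNr mulrC addrN.
    by move=> i /andP[/negbTE -> /negbTE ->]; rewrite mul0r.
pose K := kn.+1.
have Kq : (K <= q)%N by [].
pose bad := [set a : F | [exists i, exists j, r i a != r j a]].
pose S := ~: bad.
pose g := #|S|.
pose L := (M * g + 1 - c * q)%N.
pose T := {x : 'I_m * ('I_M * 'I_K) | (x.2.1 * q + x.2.2 < L)%N}.
pose cf (u : {ffun T -> F}) (i : 'I_m) (j a : nat) : F :=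
  \sum_(y : T | ((val y).1 == i) && ((val y).2.1 == j :> nat) && ((val y).2.2 == a :> nat)) u y.
pose B u i j : {poly F} := \sum_(a < K) cf u i j a *: 'X^a.
pose A u i := \sum_(j < M) B u i j * Lam F ^+ j.
have hU : forall i l, exists U : {poly F}, (size U <= h.+1)%N &&
    ((l < M)%N ==> [forall a, (hasse l (Fs i)).[a] == r i a * U.[a]]).
  move=> i l; case: (ltnP l M) => hl; last by exists 0; rewrite andbT polyseq0.
  have [U [sU hU]] := htw i l hl; exists U; rewrite sU /=.
  by apply/forallP => a; apply/eqP; exact: hU.
pose U i l := xchoose (hU i l).
have hU1 : forall i l, (size (U i l) <= h.+1)%N.
  by move=> i l; have /andP[] := xchooseP (hU i l).
have hU2 : forall i l, (l < M)%N -> forall a, (hasse l (Fs i)).[a] = r i a * (U i l).[a].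
  move=> i l hl a; have /andP[_ /implyP /(_ hl) /forallP /(_ a) /eqP] := xchooseP (hU i l).
  done.
have cfB : forall u v i j a, cf (u - v) i j a = cf u i j a - cf v i j a.
  by move=> u v i j a; rewrite /cf -sumrB; apply: eq_bigr => y _; rewrite !ffunE.
have BB : forall u v i j, B (u - v) i j = B u i j - B v i j.
  by move=> u v i j; rewrite /B -sumrB; apply: eq_bigr => a _; rewrite cfB scalerBl.
have AB : forall u v i, A (u - v) i = A u i - A v i.
  by move=> u v i; rewrite /A -sumrB; apply: eq_bigr => j _; rewrite BB mulrBl.
have cf_inv : forall u i j a, (L <= j * q + a)%N -> cf u i j a = 0.
  move=> u i j a hL; apply: big1 => y /andP[/andP[_ /eqP e2] /eqP e3].
  by have := valP y; rewrite e2 e3 ltnNge hL.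
have coefBu : forall u i j d, (B u i j)`_d = if (d < K)%N then cf u i j d else 0.
  move=> u i j d; rewrite /B coef_sum; case: ltnP => hd.
    rewrite (bigD1 (Ordinal hd)) //= coefZ coefXn eqxx mulr1 big1 ?addr0 //.
    move=> a ne; rewrite coefZ coefXn; case: eqP => [e|]; last by rewrite mulr0.
    by exfalso; move: ne; rewrite -(inj_eq val_inj) /= e eqxx.
  apply: big1 => a _; rewrite coefZ coefXn; case: eqP => [e|]; last by rewrite mulr0.
  by move: (ltn_ord a); rewrite -e ltnNge hd.
have sBK : forall u i j, (size (B u i j) <= K)%N.
  move=> u i j; apply/leq_sizeP => d hd; rewrite coefBu; case: ltnP => //.
  by rewrite ltnNge hd.
have sBL : forall u i j, (size (B u i j) <= L - j * q)%N.
  move=> u i j; apply/leq_sizeP => d hd; rewrite coefBu; case: ltnP => // _.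
  apply: cf_inv; move: hd; move: (L) (j * q)%N => L' jq; clear; lia.
have sA : forall u i, (size (A u i) <= L)%N.
  move=> u i; apply: size_sum_le => j _.
  have [->|nzB] := eqVneq (B u i j) 0; first by rewrite mul0r size_poly0.
  have h1 := sBL u i j.
  have h2 : (0 < size (B u i j))%N by rewrite size_poly_gt0.
  have h3 := size_poly_exp_leq (Lam F) j; rewrite size_Lam -/q /= in h3.
  have h4 := size_mul_leq (B u i j) (Lam F ^+ j).
  rewrite mulnC in h3; move: h1 h2 h3 h4; set a1 := size (B u i j).
  set a2 := size (Lam F ^+ j); set a3 := size _; move: (j * q)%N => jq; clear; lia.
have pdA : forall u i l, (size (pseudoderiv l (A u i)) <= K)%N.
  move=> u i l; rewrite pseudoderiv_sum; apply: size_sum_le => j _.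
  by rewrite (leq_trans (pseudoderiv_BLam _ _ _ _ _)) // (leq_trans (sBK u i j)).
pose n1 := #|[set y : 'I_M * 'I_K | (y.1 * q + y.2 < L)%N]|.
have q1 : (1 < q)%N by apply/card_gt1P; exists 0, 1; rewrite !inE eq_sym oner_neq0.
have hg : (q%:R - gamma * q%:R <= g%:R :> R).
  have e := cardsC bad; rewrite -/q in e.
  have -> : g = (q - #|bad|)%N by rewrite -e /g /S addKn.
  rewrite natrB; last by rewrite -e leq_addr.
  by rewrite lerD2l lerN2.
have q0R : (0 : R) < q%:R by rewrite ltr0n.
have hk2 : M%:R * (h%:R + 1) < kn%:R * (((m%:R - 1) - m%:R * gamma) * M%:R - m%:R * c%:R) :> R.
  by move: hk'; rewrite pmulrn.
have [cqMg ineq] := @real_ineq R m%:R c%:R h%:R M%:R gamma kn%:R q%:R g%:R mR MR g0 q0R (ler0n _ _) (ler0n _ _) hc' hk2 hg.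
have cqMg' : (c * q < M * g)%N by rewrite -(ltr_nat R) !natrM.
have LMq : (L <= M * q)%N.
  have gq : (g <= q)%N by rewrite /g /q max_card.
  have h1 : (M * g <= M * q)%N by rewrite leq_mul2l gq orbT.
  have h2 : (0 < c * q)%N by rewrite muln_gt0 c0.
  rewrite /L; move: h1 h2; move: (M * g)%N (M * q)%N (c * q)%N => x y z; clear; lia.
have cnt := count_valid M K q L Kq; rewrite (minn_idPr LMq) in cnt.
have key : (M * (K + h) < m * n1)%N.
  have c2 : (m * (K * L) <= m * n1 * q)%N by rewrite -mulnA leq_mul2l cnt orbT.
  have c3 : ((m * (K * L))%:R : R) = m%:R * (kn%:R + 1) * (M%:R * g%:R + 1 - c%:R * q%:R).
    rewrite natrM natrM /L natrB; last by move: cqMg'; clear; lia.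
    by rewrite !natrM natrD /K -addn1 !natrD mulrA natrM.
  have c4 : (m%:R * (kn%:R + 1) * (M%:R * g%:R - c%:R * q%:R) : R) <= m%:R * (kn%:R + 1) * (M%:R * g%:R + 1 - c%:R * q%:R).
    rewrite ler_pM2l; first by lra.
    by rewrite mulr_gt0 // ltr_pwDr ?ler0n.
  have c5 : ((m * (K * L))%N%:R : R) <= ((m * n1 * q)%N)%:R by rewrite ler_nat.
  have c6 : ((M * (K + h))%N%:R * q%:R : R) < m%:R * (kn%:R + 1) * (M%:R * g%:R - c%:R * q%:R).
    rewrite natrM natrD /K -addn1 natrD; move: ineq; clear; lra.
  have c7 : ((m * n1 * q)%N%:R : R) = (m * n1)%N%:R * q%:R by rewrite natrM.
  rewrite -(ltr_nat R) -(ltr_pM2r q0R).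
  move: c3 c4 c5 c6 c7; clear; lra.
pose P u (t : nat) := \sum_(i < m) \sum_(s < t.+1) pseudoderiv s (A u i) * U i (t - s)%N.
have PB : forall u v t, P (u - v) t = P u t - P v t.
  move=> u v t; rewrite /P -sumrB; apply: eq_bigr => i _; rewrite -sumrB.
  by apply: eq_bigr => s _; rewrite AB pseudoderivB mulrBl.
have sP : forall u t, (size (P u t) <= K + h)%N.
  move=> u t; apply: size_sum_le => i _; apply: size_sum_le => s _.
  have h1 := size_mul_leq (pseudoderiv s (A u i)) (U i (t - s)%N).
  have h2 := pdA u i s; have h3 := hU1 i (t - s)%N.
  move: h1 h2 h3; move: (size _) (size (pseudoderiv _ _)) (size (U _ _)) => x y z.
  clear; lia.
pose Phi (u : {ffun T -> F}) : {ffun 'I_M * 'I_(K + h) -> F} := [ffun e : 'I_M * 'I_(K + h) => (P u (nat_of_ord e.1))`_(nat_of_ord e.2)].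
have cardT : #|[pred x : 'I_m * ('I_M * 'I_K) | (x.2.1 * q + x.2.2 < L)%N]| = (m * n1)%N.
  exact: card_valid.
have [u [v [neq eqPhi]]] : exists u v, u != v /\ Phi u = Phi v.
  case: (boolP [exists u, exists v, (u != v) && (Phi u == Phi v)]).
    by move/existsP => [u /existsP [v /andP [n /eqP e]]]; exists u, v.
  move=> H; exfalso.
  have inj : injective Phi.
    move=> u v e; case: (eqVneq u v) => // n; exfalso; move/negP: H; apply.
    by apply/existsP; exists u; apply/existsP; exists v; rewrite n e eqxx.
  have := leq_card _ inj; rewrite !card_ffun card_prod !card_ord card_sig cardT -/q.
  by rewrite leq_exp2l // leqNgt key.
pose w := u - v.
have wnz : w != 0 by rewrite subr_eq0.
have Pw : forall t, (t < M)%N -> P w t = 0.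
  move=> t ht; apply/polyP => e; rewrite coef0.
  case: (ltnP e (K + h)) => he; last by move/leq_sizeP: (sP w t) => /(_ e he).
  have := congr1 (fun f : {ffun 'I_M * 'I_(K + h) -> F} => f (Ordinal ht, Ordinal he)) eqPhi; rewrite !ffunE /= => e'.
  by rewrite PB coefB e' subrr.
have [y wy] : exists y, w y != 0.
  apply/existsP; move: wnz; apply: contraR => /existsPn H; apply/eqP/ffunP => y.
  by move: (H y); rewrite negbK => /eqP ->; rewrite ffunE.
case: y wy => [[yi [yj ya]] vy] wy.
have cfy : cf w yi yj ya = w (exist _ (yi, (yj, ya)) vy).
  rewrite /cf (big_pred1 (exist _ (yi, (yj, ya)) vy)) // => z.
  apply/idP/eqP => [|->]; last by rewrite /= !eqxx.
  case: z => [[zi [zj za]] vz] /= /andP[/andP[/eqP e1 /eqP e2] /eqP e3].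
  apply: val_inj => /=; rewrite e1; congr (_, (_, _)); exact: val_inj.
have Anz : A w yi != 0.
  apply/negP => /eqP A0.
  have := Lam_adic_inj F M (B w yi) (fun j => leq_trans (sBK w yi j) Kq) A0 yj (ltn_ord yj).
  move=> e0; have := congr1 (fun p : {poly F} => p`_ya) e0.
  rewrite /= coefBu ltn_ord cfy coef0 => e.
  by rewrite e eqxx in wy.
pose G := \sum_(i < m) A w i * Fs i.
have G0 : G = 0.
  apply: (mult_zero _ M (enum S)); first exact: enum_uniq.
    move=> x; rewrite mem_enum => xS t ht.
    have rx : forall i, r i x = r i0 x.
      move=> i; move: xS; rewrite !inE => /existsPn /(_ i) /existsPn /(_ i0).
      by rewrite negbK => /eqP.
    rewrite /G (big_morph (fun p => p \Po ('X + x%:P)) (fun p q => comp_polyD p q _) (comp_poly0 _)).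
    rewrite coef_sum; apply: (etrans _ (_ : r i0 x * (P w t).[x] = 0)); last first.
      by rewrite Pw // horner0 mulr0.
    rewrite /P horner_sum mulr_sumr.
    apply: eq_bigr => i _; rewrite comp_polyM coefM horner_sum mulr_sumr.
    apply: eq_bigr => s _; rewrite hornerM -!hasse_eval pseudoderiv_eval.
    rewrite hU2; last exact: leq_ltn_trans (leq_subr _ _) ht.
    by rewrite rx mulrCA.
  rewrite -cardE -/S -/g; apply: size_sum_le => i _.
  have h1 := size_mul_leq (A w i) (Fs i).
  have h2 := sA w i; have h3 := hFs i; rewrite -/q in h3.
  move: h1 h2 h3 cqMg'; rewrite /L; move: (size _) (size (A w i)) (size (Fs i)) (M * g)%N (c * q)%N.
  clear; lia.
exists (A w); split; [|split].
- move=> i; split; first by apply: pseudo_of_nat => l; exact: pdA.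
  exact: leq_trans (sA w i) LMq.
- by exists yi.
- exact: G0.
Qed.
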